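(* Suppose $\Phi\ge6H^2\log(12|\mathcal S|^2|\mathcal A|/\delta)$ and $H\ge2$. On the event $\mathcal E^P$, for every $(s,a,s')\in\mathcal S\times\mathcal A\times\mathcal S$, $$\Big(1-\frac1H\Big)\widehat{\mathbb P}^\dagger(s'\mid s,a)\le\mathbb P^\dagger(s'\mid s,a)\le\Big(1+\frac1H\Big)\widehat{\mathbb P}^\dagger(s'\mid s,a).$$
   Context: Finite state space $\mathcal S$, finite action space $\mathcal A$, transition kernel $\mathbb P(\cdot\mid s,a)$ on $\mathcal S$, $\delta\in(0,1)$. An offline dataset of tuples $(s,a,s')$ with $s'\sim\mathbb P(\cdot\mid s,a)$ gives counts $N(s,a)$, $N(s,a,s')$. With an absorbing state $s^\dagger\notin\mathcal S$: $\mathbb P^\dagger(s'\mid s,a)=\mathbb P(s'\mid s,a)$ if $N(s,a,s')\ge\Phi$ and $0$ otherwise; $\widehat{\mathbb P}^\dagger(s'\mid s,a)=N(s,a,s')/N(s,a)$ if $N(s,a,s')\ge\Phi$ and $0$ otherwise (for $s'\in\mathcal S$). $\mathcal E^P$ is the event that for all $(s,a,s')$ with $N(s,a,s')\ge\Phi$, $|\widehat{\mathbb P}^\dagger(s'\mid s,a)-\mathbb P^\dagger(s'\mid s,a)|\le\sqrt{\frac{2\widehat{\mathbb P}^\dagger(s'\mid s,a)}{N(s,a)}\log\frac{12|\mathcal S|^2|\mathcal A|}{\delta}}+\frac{14}{3N(s,a)}\log\frac{12|\mathcal S|^2|\mathcal A|}{\delta}$. *)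

(* Defs.v *)
From HB Require Import structures.
From mathcomp Require Import all_boot all_order all_algebra.
From mathcomp Require Import reals exp.
Set Implicit Arguments. Unset Strict Implicit. Unset Printing Implicit Defensive.
Import Order.TTheory GRing.Theory Num.Theory.
Local Open Scope ring_scope.

Section Offline.
Variables (R : realType) (S A : finType).

Definition is_kernel (P : S -> A -> S -> R) : Prop :=
  forall s a, (forall s', 0 <= P s a s') /\ \sum_(s' : S) P s a s' = 1.

Definition N3 (D : seq (S * A * S)) (s : S) (a : A) (s' : S) : nat :=
  count (pred1 (s, a, s')) D.
Definition N2 (D : seq (S * A * S)) (s : S) (a : A) : nat :=
  count (fun t : S * A * S => (t.1.1 == s) && (t.1.2 == a)) D.

(* P^dagger restricted to S (mass on the absorbing state s^dagger is
   not needed for the statement) *)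
Definition Pdag (P : S -> A -> S -> R) (Phi : R) D s a s' : R :=
  if Phi <= (N3 D s a s')%:R then P s a s' else 0.
Definition Phat (Phi : R) D s a s' : R :=
  if Phi <= (N3 D s a s')%:R then (N3 D s a s')%:R / (N2 D s a)%:R else 0.

Definition logterm (delta : R) : R :=
  ln (12 * (#|S| ^ 2 * #|A|)%:R / delta).

Definition event_EP (P : S -> A -> S -> R) (Phi delta : R) D : Prop :=
  forall s a s', Phi <= (N3 D s a s')%:R ->
    `| Phat Phi D s a s' - Pdag P Phi D s a s' |
      <= Num.sqrt (2 * Phat Phi D s a s' / (N2 D s a)%:R * logterm delta)
         + 14 / (3 * (N2 D s a)%:R) * logterm delta.

End Offline.

(* Main.v *)
Require Import Defs.
From HB Require Import structures.
From mathcomp Require Import all_boot all_order all_algebra.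
From mathcomp Require Import reals exp.
From mathcomp Require Import ring lra.
Import Order.TTheory GRing.Theory Num.Theory.
Local Open Scope ring_scope.

Lemma core (R : realType) (h t w q p : R) :
  2 <= h -> 0 <= t -> 0 <= w -> 0 <= q ->
  q ^+ 2 = 2 * (h * t) * w -> 6 * h * w <= t ->
  `|h * t - p| <= q + 14 / 3 * w ->
  h * t - t <= p /\ p <= h * t + t.
Proof.
move=> h2 t0 w0 q0 qE hw.
have hwt : 6 * h * w * t <= t * t by nra.
have q2 : q ^+ 2 <= t ^+ 2 / 3 by rewrite qE; lra.
have qt : q <= 3 / 5 * t by nra.
have wt : 12 * w <= t by nra.
move=> /[dup] hA; rewrite ler_norml => /andP[h1 h2'].
split; lra.
Qed.

Theorem lemma16 (R : realType) (S A : finType) (P : S -> A -> S -> R)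
  (D : seq (S * A * S)) (Phi delta : R) (H : nat) :
  is_kernel P ->
  0 < delta < 1 ->
  (2 <= H)%N ->
  6 * (H%:R) ^+ 2 * logterm S A delta <= Phi ->
  event_EP P Phi delta D ->
  forall (s : S) (a : A) (s' : S),
    (1 - H%:R^-1) * Phat Phi D s a s' <= Pdag P Phi D s a s' /\
    Pdag P Phi D s a s' <= (1 + H%:R^-1) * Phat Phi D s a s'.
Proof.
move=> _ /andP[d0 d1] H2 hPhi EP s a s'.
have EPs := EP s a s'.
rewrite /Pdag /Phat in EPs *.
case: ifP => hN; last by rewrite !mulr0; lra.
have {}EPs := EPs hN.
rewrite hN in EPs.
set n := N3 D s a s' in hN EPs *.
set N := N2 D s a in EPs *.
set L := logterm S A delta in hPhi EPs.
set p := P s a s' in EPs *.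
have hR : 2 <= (H%:R : R) by rewrite (ler_nat R 2 H).
have L0 : 0 < L.
  rewrite /L /logterm; apply: ln_gt0.
  rewrite ltr_pdivlMr // mul1r.
  have k1 : (1 <= #|S| ^ 2 * #|A|)%N.
    have cS : (0 < #|S|)%N by apply/card_gt0P; exists s.
    have cA : (0 < #|A|)%N by apply/card_gt0P; exists a.
    by rewrite muln_gt0 expn_gt0 cS cA.
  have : (1 : R) <= (#|S| ^ 2 * #|A|)%:R by rewrite (ler_nat R 1).
  lra.
have nN : (n <= N)%N.
  apply: sub_count => -[[x y] z] /eqP [-> -> _] /=; by rewrite !eqxx.
have n0 : 0 < (n%:R : R).
  have : 0 < 6 * (H%:R : R) ^+ 2 * L by apply: mulr_gt0 => //; nra.
  lra.
have NR : (n%:R : R) <= N%:R by rewrite ler_nat.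
have N0 : 0 < (N%:R : R) by lra.
set h := (H%:R : R) in hR hPhi EPs *.
set u := (n%:R : R) / N%:R.
set t := u / h.
have ut : u = h * t by rewrite /t mulrCA divff ?mulr1 //; lra.
have hinv : h^-1 * u = t by rewrite mulrC.
rewrite mulrBl mulrDl !mul1r hinv ut.
apply: (@core R h t (L / N%:R) (Num.sqrt (2 * u / N%:R * L)) p) => //.
- rewrite /t /u; apply: divr_ge0; [apply: divr_ge0 |]; lra.
- apply: divr_ge0; lra.
- exact: sqrtr_ge0.
- rewrite sqr_sqrtr; last first.
    apply: mulr_ge0; [|lra]; apply: divr_ge0; [|lra].
    apply: mulr_ge0; [lra|]; apply: divr_ge0; lra.
  rewrite -ut /=; field; lra.
- have : 6 * h * (L / N%:R) * h = (6 * h ^+ 2 * L) / N%:R by field; lra.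
  have : 6 * h ^+ 2 * L / N%:R <= u.
    rewrite /u; apply: ler_wpM2r; first by rewrite invr_ge0; apply: ltW.
    exact: le_trans hPhi hN.
  move=> h1 h2.
  have : 6 * h * (L / N%:R) * h <= t * h by rewrite h2 -[t * h]mulrC -ut.
  by rewrite ler_pM2r // (lt_le_trans _ hR).
- rewrite -ut; move: EPs; rewrite /u.
  suff -> : 14 / (3 * N%:R) * L = 14 / 3 * (L / N%:R) by [].
  by field; rewrite gt_eqF.
Qed.
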